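(* Let $\phi:H\to G$ be a homomorphism of graphs, where $G$ is a finite graph. Then the induced functor of free categories $\mathcal{F}(\phi):\mathcal{F}(H)\to\mathcal{F}(G)$ is finitary if and only if $H$ is finite.
   Context: A graph is a directed multigraph: a set of nodes and a set of edges, each edge having a source node and a target node; it is finite if it has finitely many nodes and edges. A homomorphism of graphs maps nodes to nodes and edges to edges preserving source and target. $\mathcal{F}(G)$ denotes the free category generated by $G$: objects are nodes of $G$ and arrows are finite paths (including empty paths as identities), composed by concatenation; $\mathcal{F}(\phi)$ acts by $\phi$ on nodes and edgewise on paths. A functor $p:\mathcal{D}\to\mathcal{C}$ is finitary if for every object $A$ of $\mathcal{C}$ the set $p^{-1}(A)$ of objects of $\mathcal{D}$ mapped to $A$ is finite, and for every arrow $w$ of $\mathcal{C}$ the set $p^{-1}(w)$ of arrows of $\mathcal{D}$ mapped to $w$ is finite. *)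

(* Defs.v *)
From Stdlib Require Import List.
Import ListNotations.

Record graph : Type := Graph {
  node : Type;
  edge : Type;
  src : edge -> node;
  tgt : edge -> node
}.

Definition finite_pred {T : Type} (P : T -> Prop) : Prop :=
  exists l : list T, forall x, P x -> In x l.

Definition finite_type (T : Type) : Prop := finite_pred (fun _ : T => True).

Definition finite_graph (G : graph) : Prop :=
  finite_type (node G) /\ finite_type (edge G).

Record graph_hom (H G : graph) : Type := GraphHom {
  hom_node : node H -> node G;
  hom_edge : edge H -> edge G;
  hom_src : forall e, hom_node (src H e) = src G (hom_edge e);
  hom_tgt : forall e, hom_node (tgt H e) = tgt G (hom_edge e)
}.
Arguments hom_node {H G}.
Arguments hom_edge {H G}.

(* Arrows of the free category F(G): an arrow a -> b is a finite path,
   i.e. a list of composable edges [e1; ...; en] with src e1 = a,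
   tgt ei = src e(i+1), tgt en = b (the empty list is the identity at a = b).
   An arrow is represented by the triple (a, es, b) satisfying is_path. *)
Fixpoint is_path (G : graph) (a : node G) (es : list (edge G)) (b : node G)
  : Prop :=
  match es with
  | [] => a = b
  | e :: es' => src G e = a /\ is_path G (tgt G e) es' b
  end.

Definition free_map_arrow {H G : graph} (phi : graph_hom H G)
  (w : node H * list (edge H) * node H) : node G * list (edge G) * node G :=
  let '(a, es, b) := w in (hom_node phi a, map (hom_edge phi) es, hom_node phi b).

Definition free_functor_finitary {H G : graph} (phi : graph_hom H G) : Prop :=
  (forall A : node G, finite_pred (fun v : node H => hom_node phi v = A)) /\
  (forall (a : node G) (es : list (edge G)) (b : node G),
     is_path G a es b ->
     finite_pred (fun w : node H * list (edge H) * node H =>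
        let '(a', es', b') := w in
        is_path H a' es' b' /\ free_map_arrow phi w = (a, es, b))).

(* Main.v *)
Require Import Defs.
From Stdlib Require Import List.
Import ListNotations.

Fixpoint lists_of {T} (l : list T) (n : nat) : list (list T) :=
  match n with
  | 0 => [[]]
  | S n' => flat_map (fun e => map (cons e) (lists_of l n')) l
  end.

Lemma lists_of_in {T} (l : list T) : forall es, (forall x, In x l) ->
  In es (lists_of l (length es)).
Proof.
  induction es as [|e es IH]; intros Hl; simpl; [auto|].
  apply in_flat_map. exists e. split; [apply Hl|]. apply in_map. auto.
Qed.

Lemma fin_union {A B : Type} (l : list A) (Q : A -> B -> Prop) :
  (forall a, finite_pred (Q a)) -> finite_pred (fun x => exists a, In a l /\ Q a x).
Proof.
  intros HQ. induction l as [|a l IH].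
  - exists []. intros x [a [[] _]].
  - destruct IH as [L HL]. destruct (HQ a) as [La HLa].
    exists (La ++ L). intros x [a' [[<-|Ha'] Hq]]; apply in_or_app.
    + left; auto.
    + right; apply HL; eauto.
Qed.

Theorem mainTheorem2 (H G : graph) (phi : graph_hom H G) :
  finite_graph G ->
  (free_functor_finitary phi <-> finite_graph H).
Proof.
  intros [[lN HN] [lE HE]]. split.
  - intros [Fn Fa]. split.
    + destruct (fin_union lN (fun A v => hom_node phi v = A) Fn) as [L HL].
      exists L. intros x _. apply HL. exists (hom_node phi x). split; auto.
    + destruct (fin_union lE (fun e (w : node H * list (edge H) * node H) =>
          let '(a', es', b') := w in
          is_path H a' es' b' /\ free_map_arrow phi w = (src G e, [e], tgt G e))
          (fun e => Fa (src G e) [e] (tgt G e) (conj eq_refl eq_refl))) as [L HL].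
      exists (flat_map (fun w : node H * list (edge H) * node H =>
                match snd (fst w) with [] => [] | e :: _ => [e] end) L).
      intros x _. apply in_flat_map. exists (src H x, [x], tgt H x).
      split; [|simpl; auto].
      apply HL. exists (hom_edge phi x). split; [apply HE; exact I|].
      simpl. split; [auto|]. rewrite hom_src, hom_tgt. reflexivity.
  - intros [[hN HhN] [hE HhE]]. split.
    + intros A. exists hN. intros x _. apply HhN; exact I.
    + intros a es b _.
      exists (flat_map (fun a' => flat_map (fun es' => map (fun b' => (a', es', b')) hN)
                (lists_of hE (length es))) hN).
      intros [[a' es'] b'] [_ Heq]. simpl in Heq. inversion Heq; subst.
      apply in_flat_map. exists a'. split; [apply HhN; exact I|].
      apply in_flat_map. exists es'. split.
      * rewrite length_map. apply lists_of_in. intros; apply HhE; exact I.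
      * apply in_map. apply HhN; exact I.
Qed.
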